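(* Let the iterates be generated by the Fast PL-ADMM-PS algorithm, set $\hat{\boldsymbol{\lambda}}^{k+1}=\boldsymbol{\lambda}^k+\beta(\mathcal{A}(\mathbf{z}^k)-\mathbf{b})$, and let $$\alpha=\min\Bigl\{\frac{1}{n+1},\ \frac{\eta_i-n\|\mathcal{A}_i\|^2}{(n+1)\|\mathcal{A}_i\|^2}\ (i=1,\dots,n)\Bigr\}.$$ Then for every $k\ge0$ and every $\boldsymbol{\lambda}$, $$\langle\mathcal{A}(\mathbf{z}^{k+1})-\mathbf{b},\boldsymbol{\lambda}-\hat{\boldsymbol{\lambda}}^{k+1}\rangle+\frac{\beta\alpha}{2}\|\mathcal{A}(\mathbf{z}^{k+1})-\mathbf{b}\|^2\le\frac{1}{2\beta}\bigl(\|\boldsymbol{\lambda}^k-\boldsymbol{\lambda}\|^2-\|\boldsymbol{\lambda}^{k+1}-\boldsymbol{\lambda}\|^2\bigr)+\frac{\beta}{2}\sum_{i=1}^n\eta_i\|\mathbf{z}_i^{k+1}-\mathbf{z}_i^k\|^2.$$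
   Context: Setting: finite-dimensional real inner product spaces with induced norms $\|\cdot\|$. Problem: $\min\sum_{i=1}^n f_i(\mathbf{x}_i)$, $f_i=g_i+h_i$, subject to $\mathcal{A}(\mathbf{x}):=\sum_{i=1}^n\mathcal{A}_i(\mathbf{x}_i)=\mathbf{b}$, where $\mathbf{x}=(\mathbf{x}_1,\dots,\mathbf{x}_n)$, each $g_i,h_i$ is proper convex lower semicontinuous, $g_i$ is differentiable with $L_i$-Lipschitz gradient ($L_i>0$), each $\mathcal{A}_i$ is a nonzero linear map (adjoint $\mathcal{A}_i^T$, operator norm $\|\mathcal{A}_i\|$) into a common space. Fast PL-ADMM-PS: fix $\beta>0$ and $\eta_i>n\|\mathcal{A}_i\|^2$; given $\mathbf{x}^0,\mathbf{z}^0,\boldsymbol{\lambda}^0$ and $\theta^{(0)}=1$, for $k=0,1,2,\dots$, for each $i=1,\dots,n$ (in parallel): $\mathbf{y}_i^{k+1}=(1-\theta^{(k)})\mathbf{x}_i^k+\theta^{(k)}\mathbf{z}_i^k$; $\mathbf{z}_i^{k+1}=\arg\min_{\mathbf{x}_i}\ \langle\nabla g_i(\mathbf{y}_i^{k+1}),\mathbf{x}_i\rangle+h_i(\mathbf{x}_i)+\langle\boldsymbol{\lambda}^k,\mathcal{A}_i(\mathbf{x}_i)\rangle+\langle\beta\mathcal{A}_i^T(\mathcal{A}(\mathbf{z}^k)-\mathbf{b}),\mathbf{x}_i\rangle+\frac{L_i\theta^{(k)}+\beta\eta_i}{2}\|\mathbf{x}_i-\mathbf{z}_i^k\|^2$;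 $\mathbf{x}_i^{k+1}=(1-\theta^{(k)})\mathbf{x}_i^k+\theta^{(k)}\mathbf{z}_i^{k+1}$; then $\boldsymbol{\lambda}^{k+1}=\boldsymbol{\lambda}^k+\beta(\mathcal{A}(\mathbf{z}^{k+1})-\mathbf{b})$ and $\theta^{(k+1)}=\frac{-(\theta^{(k)})^2+\sqrt{(\theta^{(k)})^4+4(\theta^{(k)})^2}}{2}$. *)

(* Defs.v *)
From Stdlib Require Import Reals Lra.
From Stdlib Require Vectors.Fin.
Open Scope R_scope.

(* Finite-dimensional real inner product spaces are modelled (up to isometry)
   as Euclidean spaces R^d, vectors being functions Fin.t d -> R. *)
Definition Vec (d : nat) := Fin.t d -> R.

Fixpoint fsum (d : nat) : (Fin.t d -> R) -> R :=
  match d return (Fin.t d -> R) -> R with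
  | O => fun _ => 0
  | S d' => fun f => f Fin.F1 + fsum d' (fun j => f (Fin.FS j))
  end.

Fixpoint fmin (d : nat) : (Fin.t d -> R) -> R -> R :=
  match d return (Fin.t d -> R) -> R -> R with
  | O => fun _ init => init
  | S d' => fun f init => Rmin (f Fin.F1) (fmin d' (fun j => f (Fin.FS j)) init)
  end.

Definition vadd {d} (u v : Vec d) : Vec d := fun j => u j + v j.
Definition vsub {d} (u v : Vec d) : Vec d := fun j => u j - v j.
Definition vscale {d} (a : R) (u : Vec d) : Vec d := fun j => a * u j.
Definition inner {d} (u v : Vec d) : R := fsum d (fun j => u j * v j).
Definition norm {d} (u : Vec d) : R := sqrt (inner u u).

Definition Aop {m p} (M : Fin.t m -> Fin.t p -> R) (x : Vec p) : Vec m :=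
  fun r => fsum p (fun j => M r j * x j).
Definition AopT {m p} (M : Fin.t m -> Fin.t p -> R) (u : Vec m) : Vec p :=
  fun j => fsum m (fun r => M r j * u r).

Definition Atot {n m} {d : Fin.t n -> nat}
  (M : forall i, Fin.t m -> Fin.t (d i) -> R) (x : forall i, Vec (d i)) : Vec m :=
  fun r => fsum n (fun i => Aop (M i) (x i) r).

Definition is_opnorm {m p} (M : Fin.t m -> Fin.t p -> R) (c : R) : Prop :=
  is_lub (fun t => exists x : Vec p, norm x <= 1 /\ t = norm (Aop M x)) c.

Definition nonzero_map {m p} (M : Fin.t m -> Fin.t p -> R) : Prop :=
  exists r j, M r j <> 0.

(* extended reals (values in R U {+oo}) for possibly nonsmooth h_i *)
Inductive ER := ERfin (r : R) | ERinf.

Definition proper_fun {d} (h : Vec d -> ER) : Prop := exists x r, h x = ERfin r.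

Definition convex_ext {d} (h : Vec d -> ER) : Prop :=
  forall x y a b t, 0 < t < 1 -> h x = ERfin a -> h y = ERfin b ->
    exists c, h (vadd (vscale t x) (vscale (1 - t) y)) = ERfin c /\
              c <= t * a + (1 - t) * b.

Definition convex_fun {d} (g : Vec d -> R) : Prop :=
  forall x y t, 0 <= t <= 1 ->
    g (vadd (vscale t x) (vscale (1 - t) y)) <= t * g x + (1 - t) * g y.

Definition converges {d} (u : nat -> Vec d) (x : Vec d) : Prop :=
  forall eps, eps > 0 -> exists N, forall k, (k >= N)%nat -> norm (vsub (u k) x) < eps.

Definition closed_set {d} (S : Vec d -> Prop) : Prop :=
  forall (u : nat -> Vec d) x, (forall k, S (u k)) -> converges u x -> S x.

Definition lsc_ext {d} (h : Vec d -> ER) : Prop :=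
  forall c : R, closed_set (fun x => exists a, h x = ERfin a /\ a <= c).

Definition lsc_fun {d} (g : Vec d -> R) : Prop :=
  forall c : R, closed_set (fun x => g x <= c).

Definition is_gradient {d} (g : Vec d -> R) (G : Vec d -> Vec d) : Prop :=
  forall x eps, eps > 0 -> exists delta, delta > 0 /\
    forall h : Vec d, norm h < delta ->
      Rabs (g (vadd x h) - g x - inner (G x) h) <= eps * norm h.

Definition lipschitz_grad {d} (G : Vec d -> Vec d) (L : R) : Prop :=
  forall x y, norm (vsub (G x) (G y)) <= L * norm (vsub x y).

Definition is_argmin {d} (q : Vec d -> R) (h : Vec d -> ER) (z : Vec d) : Prop :=
  exists hz, h z = ERfin hz /\
    forall x hx, h x = ERfin hx -> q z + hz <= q x + hx.

Definition zsub_smooth {n m} {d : Fin.t n -> nat}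
  (M : forall i, Fin.t m -> Fin.t (d i) -> R) (b : Vec m)
  (gradg : forall i, Vec (d i) -> Vec (d i)) (L eta : Fin.t n -> R) (beta : R)
  (y z : forall i, Vec (d i)) (lam : Vec m) (theta : R) (i : Fin.t n)
  (x : Vec (d i)) : R :=
  inner (gradg i (y i)) x + inner lam (Aop (M i) x)
  + inner (vscale beta (AopT (M i) (vsub (Atot M z) b))) x
  + (L i * theta + beta * eta i) / 2 * (norm (vsub x (z i)))^2.

(* Main.v *)
Require Import Defs.
From Stdlib Require Import Reals Lra Psatz FunctionalExtensionality.
From Stdlib Require Vectors.Fin.
Open Scope R_scope.
Lemma fsum_ext d (f g : Fin.t d -> R) : (forall j, f j = g j) -> fsum d f = fsum d g.
Proof.
  revert f g; induction d; intros f g H; simpl; auto.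
  rewrite H, (IHd (fun j => f (Fin.FS j)) (fun j => g (Fin.FS j))); auto.
Qed.

Lemma fsum_le d (f g : Fin.t d -> R) : (forall j, f j <= g j) -> fsum d f <= fsum d g.
Proof.
  revert f g; induction d; intros f g H; simpl; [lra|].
  specialize (IHd (fun j => f (Fin.FS j)) (fun j => g (Fin.FS j)) (fun j => H _)).
  specialize (H Fin.F1). lra.
Qed.

Lemma fsum_plus d (f g : Fin.t d -> R) : fsum d (fun j => f j + g j) = fsum d f + fsum d g.
Proof.
  revert f g; induction d; intros f g; simpl; [lra|].
  rewrite (IHd (fun j => f (Fin.FS j)) (fun j => g (Fin.FS j))). lra.
Qed.

Lemma fsum_scal d c (f : Fin.t d -> R) : fsum d (fun j => c * f j) = c * fsum d f.
Proof.
  revert f; induction d; intros f; simpl; [lra|].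
  rewrite (IHd (fun j => f (Fin.FS j))). lra.
Qed.

Lemma fsum_minus d (f g : Fin.t d -> R) : fsum d (fun j => f j - g j) = fsum d f - fsum d g.
Proof.
  revert f g; induction d; intros f g; simpl; [lra|].
  rewrite (IHd (fun j => f (Fin.FS j)) (fun j => g (Fin.FS j))). lra.
Qed.

Lemma fsum_zero d : fsum d (fun _ => 0) = 0.
Proof. induction d; simpl; [lra|]. rewrite IHd. lra. Qed.

Lemma fsum_swap m n (F : Fin.t n -> Fin.t m -> R) :
  fsum m (fun j => fsum n (fun i => F i j)) = fsum n (fun i => fsum m (fun j => F i j)).
Proof.
  revert F; induction n; intros F; simpl.
  - apply fsum_zero.
  - rewrite fsum_plus. rewrite (IHn (fun i => F (Fin.FS i))). reflexivity.
Qed.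

Lemma fsum_lin d (f g h p q : Fin.t d -> R) c b1 b2 :
  (forall j, f j - c * (g j - h j) = b1 * p j - b2 * q j) ->
  fsum d f - c * (fsum d g - fsum d h) = b1 * fsum d p - b2 * fsum d q.
Proof.
  revert f g h p q; induction d; intros f g h p q H; simpl; [ring|].
  pose proof (H Fin.F1) as H1.
  specialize (IHd (fun j => f (Fin.FS j)) (fun j => g (Fin.FS j)) (fun j => h (Fin.FS j))
    (fun j => p (Fin.FS j)) (fun j => q (Fin.FS j)) (fun j => H _)).
  simpl in IHd. lra.
Qed.

Lemma cs_sum n (a : Fin.t n -> R) :
  fsum n a * fsum n a <= INR n * fsum n (fun i => a i * a i).
Proof.
  induction n; cbn [fsum]; [simpl; lra|].
  specialize (IHn (fun i => a (Fin.FS i))). cbn beta in IHn.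
  set (A := a Fin.F1) in *. set (S0 := fsum n (fun i => a (Fin.FS i))) in *.
  set (Q := fsum n (fun i => a (Fin.FS i) * a (Fin.FS i))) in *.
  assert (HQ : 0 <= Q).
  { unfold Q. rewrite <- (fsum_zero n). apply fsum_le. intro j. nra. }
  rewrite S_INR. assert (HN := pos_INR n). set (N := INR n) in *.
  destruct (Req_dec N 0) as [E|E].
  - rewrite E in *. assert (S0 = 0) by nra. subst N. rewrite H. nra.
  - assert (HN' : 0 < N) by lra.
    assert (K : 0 <= N * (N * A * A + Q - 2 * A * S0)).
    { replace (N * (N * A * A + Q - 2 * A * S0)) with ((N * A - S0) * (N * A - S0) + (N * Q - S0 * S0)) by ring.
      pose proof (Rle_0_sqr (N * A - S0)). unfold Rsqr in *. lra. }
    assert (K2 : 0 <= N * A * A + Q - 2 * A * S0).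
    { destruct (Rle_lt_dec 0 (N * A * A + Q - 2 * A * S0)); auto. nra. }
    nra.
Qed.

Lemma fsum_sq_zero d (f : Fin.t d -> R) :
  fsum d (fun j => f j * f j) <= 0 -> forall j, f j = 0.
Proof.
  revert f; induction d; intros f H j; [inversion j|].
  simpl in H.
  assert (HQ : 0 <= fsum d (fun j => f (Fin.FS j) * f (Fin.FS j))).
  { rewrite <- (fsum_zero d). apply fsum_le. intro i. nra. }
  refine (Fin.caseS' j (fun j => f j = 0) _ _).
  - nra.
  - intro p. apply (IHd (fun j => f (Fin.FS j))). nra.
Qed.

Lemma fmin_init d f init : fmin d f init <= init.
Proof.
  revert f; induction d; intros f; simpl; [lra|].
  specialize (IHd (fun j => f (Fin.FS j))). eapply Rle_trans; [apply Rmin_r|exact IHd].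
Qed.

Lemma fmin_le d f init (i : Fin.t d) : fmin d f init <= f i.
Proof.
  revert f i; induction d; intros f i; [inversion i|].
  refine (Fin.caseS' i (fun i => fmin (S d) f init <= f i) _ _); simpl.
  - apply Rmin_l.
  - intro p. eapply Rle_trans; [apply Rmin_r| apply (IHd (fun j => f (Fin.FS j)))].
Qed.

Definition sq {d} (u : Vec d) := inner u u.

Lemma sq_nonneg {d} (u : Vec d) : 0 <= sq u.
Proof. unfold sq, inner. rewrite <- (fsum_zero d). apply fsum_le. intro j. nra. Qed.

Lemma norm_sq {d} (u : Vec d) : norm u ^ 2 = sq u.
Proof. unfold norm. apply pow2_sqrt. apply sq_nonneg. Qed.

Lemma norm_scale {d} s (u : Vec d) : 0 <= s -> norm (vscale s u) = s * norm u.
Proof.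
  intro Hs. unfold norm.
  replace (inner (vscale s u) (vscale s u)) with ((s * s) * inner u u).
  - rewrite sqrt_mult_alt by nra. rewrite sqrt_square by lra. reflexivity.
  - unfold inner, vscale. rewrite <- fsum_scal. apply fsum_ext. intro j. ring.
Qed.

Lemma Aop_scale {m p} (M : Fin.t m -> Fin.t p -> R) s x :
  Aop M (vscale s x) = vscale s (Aop M x).
Proof.
  extensionality r. unfold Aop, vscale. rewrite <- fsum_scal. apply fsum_ext. intro j. ring.
Qed.

Lemma norm_nonneg {d} (u : Vec d) : 0 <= norm u.
Proof. unfold norm. apply sqrt_pos. Qed.

Lemma opnorm_bound {m p} (M : Fin.t m -> Fin.t p -> R) c x :
  is_opnorm M c -> sq (Aop M x) <= c ^ 2 * sq x.
Proof.
  intros [Hub _].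
  assert (HN := norm_nonneg x). assert (HP := norm_nonneg (Aop M x)).
  rewrite <- !norm_sq.
  destruct (Rlt_or_le 0 (norm x)) as [Hpos|Hz].
  - assert (H1 : norm (Aop M (vscale (/ norm x) x)) <= c).
    { apply Hub. exists (vscale (/ norm x) x). split; [|reflexivity].
      rewrite norm_scale by (left; apply Rinv_0_lt_compat; lra).
      rewrite Rinv_l by lra. lra. }
    rewrite Aop_scale, norm_scale in H1 by (left; apply Rinv_0_lt_compat; lra).
    assert (H2 : norm (Aop M x) <= c * norm x).
    { apply (Rmult_le_reg_l (/ norm x)); [apply Rinv_0_lt_compat; lra|].
      replace (/ norm x * (c * norm x)) with c by (field; lra). exact H1. }
    nra.
  - assert (Hx0 : norm x = 0) by lra. rewrite Hx0.
    destruct (Rlt_or_le 0 (norm (Aop M x))) as [HA|HA]; [|nra].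
    exfalso.
    set (s := (Rabs c + 1) / norm (Aop M x)).
    assert (Hs : 0 < s) by (unfold s; apply Rdiv_lt_0_compat; [pose proof (Rabs_pos c); lra|lra]).
    assert (H1 : norm (Aop M (vscale s x)) <= c).
    { apply Hub. exists (vscale s x). split; [|reflexivity].
      rewrite norm_scale by lra. rewrite Hx0. lra. }
    rewrite Aop_scale, norm_scale in H1 by lra.
    unfold s in H1. replace ((Rabs c + 1) / norm (Aop M x) * norm (Aop M x)) with (Rabs c + 1) in H1
      by (field; lra).
    pose proof (Rle_abs c). lra.
Qed.

Theorem proposition4
  (n m : nat) (d : Fin.t n -> nat)
  (M : forall i : Fin.t n, Fin.t m -> Fin.t (d i) -> R) (b : Vec m)
  (g : forall i : Fin.t n, Vec (d i) -> R)
  (gradg : forall i : Fin.t n, Vec (d i) -> Vec (d i))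
  (h : forall i : Fin.t n, Vec (d i) -> ER)
  (L normA eta : Fin.t n -> R) (beta : R)
  (xs ys zs : nat -> forall i : Fin.t n, Vec (d i))
  (lam : nat -> Vec m) (theta : nat -> R)
  (* problem data *)
  (Hg_conv : forall i, convex_fun (g i))
  (Hg_lsc : forall i, lsc_fun (g i))
  (Hg_grad : forall i, is_gradient (g i) (gradg i))
  (HL : forall i, L i > 0)
  (Hg_lip : forall i, lipschitz_grad (gradg i) (L i))
  (Hh_proper : forall i, proper_fun (h i))
  (Hh_conv : forall i, convex_ext (h i))
  (Hh_lsc : forall i, lsc_ext (h i))
  (HA_nz : forall i, nonzero_map (M i))
  (HnormA : forall i, is_opnorm (M i) (normA i))
  (* parameters *)
  (Hbeta : beta > 0)
  (Heta : forall i, eta i > INR n * (normA i)^2)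
  (* Fast PL-ADMM-PS iterations *)
  (Htheta0 : theta 0%nat = 1)
  (Hy : forall k i, ys (S k) i =
          vadd (vscale (1 - theta k) (xs k i)) (vscale (theta k) (zs k i)))
  (Hz : forall k i, is_argmin
          (zsub_smooth M b gradg L eta beta (ys (S k)) (zs k) (lam k) (theta k) i)
          (h i) (zs (S k) i))
  (Hx : forall k i, xs (S k) i =
          vadd (vscale (1 - theta k) (xs k i)) (vscale (theta k) (zs (S k) i)))
  (Hlam : forall k, lam (S k) =
          vadd (lam k) (vscale beta (vsub (Atot M (zs (S k))) b)))
  (Htheta : forall k, theta (S k) =
          (- (theta k)^2 + sqrt ((theta k)^4 + 4 * (theta k)^2)) / 2) :
  let alpha := fmin n (fun i => (eta i - INR n * (normA i)^2)
                                 / ((INR n + 1) * (normA i)^2)) (1 / (INR n + 1)) in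
  forall (k : nat) (l : Vec m),
    let lamhat := vadd (lam k) (vscale beta (vsub (Atot M (zs k)) b)) in
    inner (vsub (Atot M (zs (S k))) b) (vsub l lamhat)
      + beta * alpha / 2 * (norm (vsub (Atot M (zs (S k))) b))^2
    <= 1 / (2 * beta) * ((norm (vsub (lam k) l))^2 - (norm (vsub (lam (S k)) l))^2)
       + beta / 2 * fsum n (fun i => eta i * (norm (vsub (zs (S k) i) (zs k i)))^2).
Proof.
  intros alpha k l lamhat.
  rewrite (Hlam k).
  set (z1 := zs (S k)) in *. set (z0 := zs k) in *.
  set (r := vsub (Atot M z1) b).
  set (Dl := fun i => vsub (z1 i) (z0 i)).
  set (w := Atot M Dl).
  assert (Hrk : vsub (Atot M z0) b = vsub r w).
  { extensionality j. unfold r, w, vsub, Atot, Dl.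
    assert (E : fsum n (fun i => Aop (M i) (fun j0 => z1 i j0 - z0 i j0) j)
              = fsum n (fun i => Aop (M i) (z1 i) j) - fsum n (fun i => Aop (M i) (z0 i) j)).
    { rewrite <- fsum_minus. apply fsum_ext. intro i. unfold Aop.
      rewrite <- fsum_minus. apply fsum_ext. intro q. ring. }
    cbv beta. change (fun i => Aop (M i) (vsub (z1 i) (z0 i)) j) with (fun i => Aop (M i) (fun j0 => z1 i j0 - z0 i j0) j). rewrite E. ring. }
  assert (E1 : inner r (vsub l lamhat)
     - 1 / (2 * beta) * (norm (vsub (lam k) l) ^ 2 - norm (vsub (vadd (lam k) (vscale beta r)) l) ^ 2)
     = beta * inner r w - beta / 2 * inner r r).
  { unfold lamhat. rewrite Hrk. rewrite !norm_sq. unfold sq, inner.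
    apply fsum_lin. intro j. unfold vsub, vadd, vscale. field. lra. }
  set (N := INR n).
  assert (HN : 0 <= N) by apply pos_INR.
  assert (Ha1 : alpha <= 1 / (N + 1)) by apply fmin_init.
  assert (Hq : 1 / (N + 1) <= 1).
  { assert (0 < 1 / (N + 1)) by (apply Rdiv_lt_0_compat; lra).
    assert (1 / (N + 1) * (N + 1) = 1) by (field; lra). nra. }
  set (c := 1 - alpha).
  assert (Hc : 0 <= c) by (unfold c; lra).
  assert (P4 : forall i, N * normA i ^ 2 <= c * eta i).
  { intro i.
    assert (Ha2 := fmin_le n (fun i => (eta i - INR n * (normA i)^2)
                                 / ((INR n + 1) * (normA i)^2)) (1 / (INR n + 1)) i).
    fold alpha in Ha2. cbv beta in Ha2. fold N in Ha2.
    assert (Hai := pow2_ge_0 (normA i)). set (a := normA i ^ 2) in *.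
    assert (He := Heta i). fold N in He. fold a in He. set (e := eta i) in *.
    unfold c.
    destruct (Req_dec a 0) as [Ea|Ea].
    - rewrite Ea in *. assert (alpha <= 1) by lra. nra.
    - assert (Hap : 0 < a) by lra.
      set (t := (e - N * a) / ((N + 1) * a)) in *.
      assert (Ht : t * ((N + 1) * a) = e - N * a) by (unfold t; field; lra).
      assert (Htp : 0 <= t) by (unfold t; apply Rmult_le_pos; [lra| left; apply Rinv_0_lt_compat; nra]).
      set (q := 1 / (N + 1)) in *.
      assert (Hq1 : q * (N + 1) = 1) by (unfold q; field; lra).
      assert (Hq0 : 0 < q) by (unfold q; apply Rdiv_lt_0_compat; lra).
      destruct (Rle_lt_dec e ((N + 1) * a)).
      + assert (0 <= N * a) by (apply Rmult_le_pos; lra). assert (alpha * e <= t * e) by (apply Rmult_le_compat_r; lra). assert (t * e <= t * ((N + 1) * a)) by (apply Rmult_le_compat_l; lra). lra.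
      + assert (0 <= N * a) by (apply Rmult_le_pos; lra). assert (alpha * e <= q * e) by (apply Rmult_le_compat_r; lra).
        assert (0 <= q * N) by nra. nra. }
  set (E := fsum n (fun i => eta i * sq (Dl i))).
  assert (HW : inner w w <= c * E).
  { apply Rle_trans with (N * fsum n (fun i => sq (Aop (M i) (Dl i)))).
    - unfold inner at 1. unfold w at 1 2, Atot.
      apply Rle_trans with (fsum m (fun j => N * fsum n (fun i => Aop (M i) (Dl i) j * Aop (M i) (Dl i) j))).
      + apply fsum_le. intro j. apply cs_sum.
      + rewrite fsum_scal. rewrite fsum_swap. right. reflexivity.
    - unfold E. rewrite <- !fsum_scal. apply fsum_le. intro i.
      pose proof (opnorm_bound (M i) (normA i) (Dl i) (HnormA i)).
      pose proof (P4 i). pose proof (sq_nonneg (Dl i)). nra. }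
  assert (HE : 0 <= E).
  { unfold E. rewrite <- (fsum_zero n). apply fsum_le. intro i.
    pose proof (sq_nonneg (Dl i)). pose proof (Heta i) as Hi. fold N in Hi. pose proof (pow2_ge_0 (normA i)).
    assert (0 <= N * normA i ^ 2) by (apply Rmult_le_pos; lra). apply Rmult_le_pos; lra. }
  assert (HR2 : 0 <= inner r r) by apply sq_nonneg.
  assert (H : inner r w <= c / 2 * inner r r + E / 2).
  { destruct (Req_dec c 0) as [Ec|Ec].
    - assert (Hw0 : forall j, w j = 0).
      { apply fsum_sq_zero. fold (inner w w). rewrite Ec in HW. lra. }
      assert (inner r w = 0).
      { unfold inner. rewrite <- (fsum_zero m). apply fsum_ext. intro j. rewrite Hw0. ring. }
      rewrite Ec. lra.
    - assert (Hcp : 0 < c) by lra.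
      assert (inner r w <= c / 2 * inner r r + / (2 * c) * inner w w).
      { unfold inner. rewrite <- !fsum_scal, <- fsum_plus. apply fsum_le. intro j.
        assert (K : c / 2 * (r j * r j) + / (2 * c) * (w j * w j) - r j * w j
                    = / (2 * c) * ((c * r j - w j) * (c * r j - w j))) by (field; lra).
        assert (0 <= / (2 * c)) by (left; apply Rinv_0_lt_compat; lra).
        assert (0 <= (c * r j - w j) * (c * r j - w j)) by (apply Rle_0_sqr).
        assert (0 <= / (2 * c) * ((c * r j - w j) * (c * r j - w j))) by (apply Rmult_le_pos; lra). cbv beta. lra. }
      assert (/ (2 * c) * inner w w <= E / 2).
      { apply Rmult_le_reg_l with (2 * c); [lra|].
        replace (2 * c * (/ (2 * c) * inner w w)) with (inner w w) by (field; lra). nra. }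
      lra. }
  assert (HEg : fsum n (fun i => eta i * norm (vsub (z1 i) (z0 i)) ^ 2) = E).
  { unfold E. apply fsum_ext. intro i. rewrite norm_sq. reflexivity. }
  rewrite HEg. rewrite norm_sq. unfold sq.
  assert (beta * inner r w <= beta * (c / 2 * inner r r + E / 2)) by (apply Rmult_le_compat_l; lra).
  unfold c in *. lra.
Qed.
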